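(* With $L_\infty$, $L_\infty^\pm$ and $d(n)$ as in the context, $$L_\infty=\tfrac1{n+1}L^+_\infty+O(\eta^{n+1})\ \text{ as }\eta=1-s\to0^+,\qquad L_\infty=\tfrac1{d(n)}L^-_\infty+O(s^{\frac{n+1}{n}})\ \text{ as }s\to0^+,$$ in the following sense: the zeroth-order coefficients agree, and each coefficient of $\partial^2$ and of $\partial$ of $L_\infty$ equals the corresponding coefficient of the model operator (written in the same variable) times $1+O(\epsilon)$, with $\epsilon=\eta^{n+1}$ resp. $\epsilon=s^{(n+1)/n}$.
   Context: Fix $n\ge2$ and let $c(n):=\int_0^\infty(e^\xi-1)^{-1/(n+1)}d\xi$, $d(n):=\big(\frac{n}{n+1}\big)^{1/n}c(n)^{\frac{n+1}{n}}$. Define $\Phi_\infty:(0,1)\to(0,\infty)$ by $\int_0^{\Phi_\infty(s)}(e^\xi-1)^{-1/(n+1)}d\xi=c(n)\,s$ (then $\Phi_\infty',\Phi_\infty''>0$), and define the ordinary differential operator on $(0,1)$ $$L_\infty u:=\frac{u''}{\Phi_\infty''}+(n-1)\frac{u'}{\Phi_\infty'}-u,$$ (primes are $d/ds$; this is the collapsed limit of $\Delta-\mathrm{Id}$ on radial functions on the neck). Write $\eta:=1-s$. Model operators: $L^+_\infty:=\eta^2\partial^2_{\eta\eta}-(n-1)\eta\partial_\eta-(n+1)\mathrm{Id}$ and $L^-_\infty:=n s^{\frac{n-1}{n}}\partial^2_{ss}+(n-1)s^{-\frac1n}\partial_s-d(n)\mathrm{Id}$. *)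

(* Defs.v *)
From Stdlib Require Import Reals.
From Coquelicot Require Import Coquelicot.
Open Scope R_scope.

Definition integrand (n : nat) (xi : R) : R :=
  Rpower (exp xi - 1) (- (1 / (INR n + 1))).

Definition c_n (n : nat) : R :=
  RInt_gen (integrand n) (at_right 0) (Rbar_locally p_infty).

Definition d_n (n : nat) : R :=
  Rpower (INR n / (INR n + 1)) (1 / INR n) * Rpower (c_n n) ((INR n + 1) / INR n).

Definition is_Phi_infty (n : nat) (Phi : R -> R) : Prop :=
  forall s, 0 < s < 1 ->
    0 < Phi s /\
    is_RInt_gen (integrand n) (at_right 0) (at_point (Phi s)) (c_n n * s).

(* Coefficients of L_infty u = u''/Phi'' + (n-1) u'/Phi' - u  in the variable s *)
Definition Linf_c2 (Phi : R -> R) (s : R) : R := / Derive_n Phi 2 s.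
Definition Linf_c1 (n : nat) (Phi : R -> R) (s : R) : R := (INR n - 1) / Derive Phi s.
Definition Linf_c0 : R := -1.

(* Same operator rewritten in eta = 1 - s:  d/ds = - d/deta, d^2/ds^2 = d^2/deta^2 *)
Definition Linf_eta_c2 (Phi : R -> R) (eta : R) : R := Linf_c2 Phi (1 - eta).
Definition Linf_eta_c1 (n : nat) (Phi : R -> R) (eta : R) : R := - Linf_c1 n Phi (1 - eta).

(* Coefficients of (1/(n+1)) L^+ = (1/(n+1)) (eta^2 d^2 - (n-1) eta d - (n+1) Id), in eta *)
Definition Lplus_c2 (n : nat) (eta : R) : R := eta ^ 2 / (INR n + 1).
Definition Lplus_c1 (n : nat) (eta : R) : R := - ((INR n - 1) * eta) / (INR n + 1).
Definition Lplus_c0 (n : nat) : R := - (INR n + 1) / (INR n + 1).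

(* Coefficients of (1/d) L^- = (1/d)(n s^((n-1)/n) d^2 + (n-1) s^(-1/n) d - d Id), in s *)
Definition Lminus_c2 (n : nat) (s : R) : R :=
  INR n * Rpower s ((INR n - 1) / INR n) / d_n n.
Definition Lminus_c1 (n : nat) (s : R) : R :=
  (INR n - 1) * Rpower s (- (1 / INR n)) / d_n n.
Definition Lminus_c0 (n : nat) : R := - d_n n / d_n n.

(* a = b (1 + O(eps)) as x -> 0^+ : |a x - b x| <= C eps(x) |b x| for 0 < x < delta *)
Definition rel_err_O (a b eps : R -> R) : Prop :=
  exists C delta, 0 < delta /\
    forall x, 0 < x < delta -> Rabs (a x - b x) <= C * eps x * Rabs (b x).

(* Main.v *)
Require Import Defs.
From Stdlib Require Import Reals.
From Coquelicot Require Import Coquelicot.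
Open Scope R_scope.
From Stdlib Require Import Lra Psatz Classical_Prop.

Lemma ln_le_xm1 x : 0 < x -> ln x <= x - 1.
Proof. intros Hx. pose proof (exp_ineq1_le (ln x)). rewrite exp_ln in H; lra. Qed.

Lemma ln_ge_1mx x : 0 < x -> 1 - / x <= ln x.
Proof. intros Hx. pose proof (ln_le_xm1 (/ x) (Rinv_0_lt_compat _ Hx)).
  rewrite ln_Rinv in H; lra. Qed.

Lemma abs_ln_le x : / 2 <= x -> Rabs (ln x) <= 2 * Rabs (x - 1).
Proof. intros Hx.
  destruct (Rle_lt_dec 1 x).
  - assert (0 <= ln x) by (rewrite <- ln_1; apply ln_le; lra).
    pose proof (ln_le_xm1 x ltac:(lra)).
    rewrite !Rabs_pos_eq; lra.
  - assert (ln x <= 0) by (rewrite <- ln_1; apply ln_le; lra).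
    pose proof (ln_ge_1mx x ltac:(lra)).
    assert (1 - / x >= 2 * (x - 1)).
    { assert (/ x * x = 1) by (field; lra).
      assert (0 < / x) by (apply Rinv_0_lt_compat; lra). nra. }
    rewrite Rabs_left1 by lra. rewrite Rabs_left1 by lra. lra.
Qed.

Lemma abs_exp_m1 t : t <= 1 -> Rabs (exp t - 1) <= 3 * Rabs t.
Proof. intros Ht. pose proof (exp_ineq1_le t).
  destruct (Rle_lt_dec 0 t).
  - pose proof (exp_ineq1_le (-t)). rewrite exp_Ropp in H0.
    assert (0 < exp t) by apply exp_pos.
    assert (exp t <= 3). { pose proof exp_le_3. assert (exp t <= exp 1).
      { destruct (Req_dec t 1). subst; lra. left; apply exp_increasing; lra. } lra. }
    assert (exp t - 1 <= t * exp t).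
    { assert (/ exp t * exp t = 1) by (field; lra). nra. }
    rewrite !Rabs_pos_eq; nra.
  - assert (exp t < 1) by (rewrite <- exp_0; apply exp_increasing; lra).
    rewrite !Rabs_left1; lra.
Qed.

Lemma expm1_gt x : 0 < x -> x < exp x - 1.
Proof. intros. pose proof (exp_ineq1 x ltac:(lra)). lra. Qed.

Lemma expm1_le x : 0 <= x -> exp x - 1 <= x * exp x.
Proof. intros. pose proof (exp_ineq1_le (-x)). rewrite exp_Ropp in H0.
  assert (0 < exp x) by apply exp_pos.
  assert (/ exp x * exp x = 1) by (field; lra). nra. Qed.

Lemma exp_mul_nat (k : nat) x : exp x ^ k = exp (INR k * x).
Proof. induction k. simpl. rewrite Rmult_0_l, exp_0; auto.
  rewrite S_INR. simpl. rewrite IHk. rewrite <- exp_plus. f_equal; ring. Qed.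

Lemma rel_from_log (X Y eps : R -> R) (K delta : R) :
  0 < delta -> 0 <= K ->
  (forall x, 0 < x < delta -> 0 < X x /\ 0 < Y x /\ 0 <= eps x /\
     Rabs (ln (X x) - ln (Y x)) <= K * eps x /\ Rabs (ln (X x) - ln (Y x)) <= 1) ->
  rel_err_O X Y eps.
Proof.
  intros Hd HK H. exists (3 * K), delta. split; auto.
  intros x Hx. destruct (H x Hx) as (HX & HY & He & Hl & Hl1).
  set (D := ln (X x) - ln (Y x)).
  assert (X x = Y x * exp D).
  { unfold D, Rminus. rewrite exp_plus, exp_ln by lra. rewrite exp_Ropp, exp_ln by lra. field; lra. }
  rewrite H0. replace (Y x * exp D - Y x) with (Y x * (exp D - 1)) by ring.
  rewrite Rabs_mult. rewrite (Rabs_pos_eq (Y x)) by lra.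
  assert (D <= 1). { unfold D. pose proof (Rle_abs (ln (X x) - ln (Y x))). lra. }
  pose proof (abs_exp_m1 D H1).
  fold D in Hl.
  assert (Rabs (exp D - 1) <= 3 * K * eps x) by (rewrite Rmult_assoc; lra).
  rewrite Rmult_comm. apply Rmult_le_compat_r; lra.
Qed.

Lemma rel_neg (X Y eps : R -> R) : rel_err_O (fun x => - X x) (fun x => - Y x) eps -> rel_err_O X Y eps.
Proof. intros (C & d & Hd & H). exists C, d. split; auto. intros x Hx. specialize (H x Hx).
  replace (X x - Y x) with (- (- X x - - Y x)) by ring. rewrite Rabs_Ropp.
  rewrite <- (Rabs_Ropp (Y x)). auto. Qed.
Definition fa (a x : R) := exp (- a * ln (exp x - 1)).

Lemma fa_pos a x : 0 < fa a x.
Proof. apply exp_pos. Qed.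

Lemma expm1_pos x : 0 < x -> 0 < exp x - 1.
Proof. intros; pose proof (expm1_gt x H); lra. Qed.

Lemma fa_deriv a x : 0 < x -> is_derive (fa a) x (- a * exp x / (exp x - 1) * fa a x).
Proof. intros Hx. pose proof (expm1_pos x Hx). unfold fa.
  auto_derive. lra. unfold Rminus, Rdiv. ring. Qed.

Lemma fa_cont a x : 0 < x -> continuous (fa a) x.
Proof. intros. apply (ex_derive_continuous (fa a) x). eexists. apply fa_deriv; auto. Qed.

Lemma fa_decr a x y : 0 <= a -> 0 < x -> x <= y -> fa a y <= fa a x.
Proof. intros Ha Hx Hxy. unfold fa.
  assert (ln (exp x - 1) <= ln (exp y - 1)).
  { apply ln_le. apply expm1_pos; auto.
    destruct (Req_dec x y). subst; lra. pose proof (exp_increasing x y); lra. }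
  destruct (Req_dec (- a * ln (exp y - 1)) (- a * ln (exp x - 1))). rewrite H0; lra.
  left; apply exp_increasing. nra. Qed.

Lemma exp_le_mono x y : x <= y -> exp x <= exp y.
Proof. intros. destruct (Req_dec x y). subst; lra. left; apply exp_increasing; lra. Qed.

Lemma fa_near0 a x : 0 <= a -> 0 < x ->
  Rabs (fa a x - exp (- a * ln x)) <= a * x * exp (- a * ln x).
Proof. intros Ha Hx. unfold fa.
  pose proof (expm1_pos x Hx).
  assert (ln x <= ln (exp x - 1)) by (apply ln_le; auto; left; apply expm1_gt; auto).
  assert (ln (exp x - 1) <= ln x + x).
  { replace (ln x + x) with (ln (x * exp x)) by (rewrite ln_mult, ln_exp; auto; apply exp_pos).
    apply ln_le; auto. pose proof (expm1_le x ltac:(lra)). lra. }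
  assert (E1: exp (- a * ln (exp x - 1)) <= exp (- a * ln x)) by (apply exp_le_mono; nra).
  assert (E2: exp (- a * ln x) * exp (- a * x) <= exp (- a * ln (exp x - 1))).
  { rewrite <- exp_plus. apply exp_le_mono; nra. }
  pose proof (exp_ineq1_le (- a * x)).
  pose proof (exp_pos (- a * ln x)).
  rewrite Rabs_left1 by lra. nra.
Qed.

Lemma exp1_gt2 : 2 < exp 1.
Proof. pose proof (exp_ineq1 1 ltac:(lra)). lra. Qed.

Lemma fa_nearinf a x : 0 <= a <= 1 -> 1 <= x ->
  Rabs (fa a x - exp (- a * x)) <= 2 * exp (- (1 + a) * x).
Proof. intros Ha Hx. unfold fa.
  set (t := exp (- x)).
  assert (Ht0 : 0 < t) by apply exp_pos.
  assert (Ht1 : t < / 2).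
  { unfold t. rewrite exp_Ropp. apply Rinv_lt_contravar. pose proof (exp_pos x); nra.
    pose proof exp1_gt2. pose proof (exp_le_mono 1 x Hx). lra. }
  assert (Hex : exp x - 1 = exp x * (1 - t)).
  { unfold t. rewrite exp_Ropp. field. pose proof (exp_pos x); lra. }
  rewrite Hex. rewrite ln_mult by (try apply exp_pos; lra). rewrite ln_exp.
  assert (Hl : ln (1 - t) < 0) by (rewrite <- ln_1; apply ln_increasing; lra).
  replace (- a * (x + ln (1 - t))) with (- a * x + - a * ln (1 - t)) by ring.
  rewrite exp_plus.
  assert (exp (- (1 + a) * x) = exp (- a * x) * t).
  { unfold t. rewrite <- exp_plus. f_equal; ring. }
  rewrite H.
  assert (1 <= exp (- a * ln (1 - t))) by (apply Rle_trans with (exp 0); [rewrite exp_0; lra| apply exp_le_mono; nra]).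
  assert (exp (- a * ln (1 - t)) <= / (1 - t)).
  { rewrite <- exp_ln with (x := / (1 - t)) by (apply Rinv_0_lt_compat; lra).
    rewrite ln_Rinv by lra. apply exp_le_mono. nra. }
  assert (/ (1 - t) <= 1 + 2 * t).
  { apply (Rmult_le_reg_r (1 - t)). lra. rewrite Rinv_l by lra. nra. }
  pose proof (exp_pos (- a * x)).
  rewrite Rabs_pos_eq by nra. nra.
Qed.

Lemma locally_pos x : 0 < x -> locally x (fun y => 0 < y).
Proof. intros Hx. exists (mkposreal x Hx). intros y Hy.
  change (Rabs (y - x) < x) in Hy. apply Rabs_lt_between in Hy. lra. Qed.

Lemma at_right0_pos : at_right 0 (fun y => 0 < y).
Proof. unfold at_right, within. apply filter_forall. auto. Qed.

Lemma filterlim_at_point_id (F : R -> R) y : filterlim F (at_point y) (locally (F y)).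
Proof. intros P HP. unfold filtermap, at_point. apply locally_singleton; auto. Qed.

Lemma gen_right0 (F g : R -> R) y l0 : 0 < y ->
  (forall x, 0 < x -> is_derive F x (g x)) -> (forall x, 0 < x -> continuous g x) ->
  filterlim F (at_right 0) (locally l0) ->
  is_RInt_gen g (at_right 0) (at_point y) (F y - l0).
Proof.
  intros Hy Hd Hc Hl.
  apply is_RInt_gen_ext with (f := Derive F).
  { exists (fun a => 0 < a) (fun b => b = y). apply at_right0_pos. reflexivity.
    intros a b Ha Hb x Hx. simpl in Hx. subst b. apply is_derive_unique, Hd.
    pose proof (Rmin_glb_lt a y 0 Ha Hy). lra. }
  apply is_RInt_gen_Derive.
  { exists (fun a => 0 < a) (fun b => b = y). apply at_right0_pos. reflexivity.
    intros a b Ha Hb x Hx. simpl in Hx. subst b. eexists; apply Hd.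
    pose proof (Rmin_glb_lt a y 0 Ha Hy). lra. }
  { exists (fun a => 0 < a) (fun b => b = y). apply at_right0_pos. reflexivity.
    intros a b Ha Hb x Hx. simpl in Hx. subst b.
    assert (0 < x) by (pose proof (Rmin_glb_lt a y 0 Ha Hy); lra).
    apply continuous_ext_loc with g.
    { apply filter_imp with (2 := locally_pos x H). intros t Ht. symmetry. apply is_derive_unique, Hd; auto. }
    apply Hc; auto. }
  auto. apply filterlim_at_point_id.
Qed.

Lemma gen_pinf (F g : R -> R) x l : 0 < x ->
  (forall t, 0 < t -> is_derive F t (g t)) -> (forall t, 0 < t -> continuous g t) ->
  filterlim F (Rbar_locally p_infty) (locally l) ->
  is_RInt_gen g (at_point x) (Rbar_locally p_infty) (l - F x).
Proof.
  intros Hx Hd Hc Hl.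
  assert (HP : Rbar_locally p_infty (fun b => 0 < b)) by (exists 0; auto).
  apply is_RInt_gen_ext with (f := Derive F).
  { exists (fun a => a = x) (fun b => 0 < b). reflexivity. auto.
    intros a b Ha Hb t Ht. simpl in Ht. subst a. apply is_derive_unique, Hd.
    pose proof (Rmin_glb_lt x b 0 Hx Hb). lra. }
  apply is_RInt_gen_Derive.
  { exists (fun a => a = x) (fun b => 0 < b). reflexivity. auto.
    intros a b Ha Hb t Ht. simpl in Ht. subst a. eexists; apply Hd.
    pose proof (Rmin_glb_lt x b 0 Hx Hb). lra. }
  { exists (fun a => a = x) (fun b => 0 < b). reflexivity. auto.
    intros a b Ha Hb t Ht. simpl in Ht. subst a.
    assert (0 < t) by (pose proof (Rmin_glb_lt x b 0 Hx Hb); lra).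
    apply continuous_ext_loc with g.
    { apply filter_imp with (2 := locally_pos t H). intros u Hu. symmetry. apply is_derive_unique, Hd; auto. }
    apply Hc; auto. }
  apply filterlim_at_point_id. auto.
Qed.

Lemma gen_cmp {Fa Fb} {HFa : ProperFilter Fa} {HFb : ProperFilter Fb}
  (f g r : R -> R) (lf lg lr : R) :
  filter_prod Fa Fb (fun ab => fst ab <= snd ab) ->
  filter_prod Fa Fb (fun ab => forall x, fst ab <= x <= snd ab -> Rabs (f x - g x) <= r x) ->
  is_RInt_gen f Fa Fb lf -> is_RInt_gen g Fa Fb lg -> is_RInt_gen r Fa Fb lr ->
  Rabs (lf - lg) <= lr.
Proof.
  intros H1 H2 Hf Hg Hr.
  pose proof (is_RInt_gen_minus f g lf lg Hf Hg) as Hm.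
  exact (RInt_gen_norm (fun y => minus (f y) (g y)) r _ lr H1 H2 Hm Hr).
Qed.

Ltac req := match goal with |- @eq _ ?x ?y => change (@eq R x y) end.

Definition pw (p t : R) := exp (p * ln t).

Lemma pw_pos p t : 0 < pw p t.
Proof. apply exp_pos. Qed.

Lemma pw_deriv p t : 0 < t -> is_derive (pw p) t (p * pw p t / t).
Proof. intros Ht. unfold pw. auto_derive. lra. field. lra. Qed.

Lemma pw_shift p q t : 0 < t -> p = q + 1 -> pw p t = t * pw q t.
Proof. intros Ht ->. unfold pw. replace ((q + 1) * ln t) with (ln t + q * ln t) by ring.
  rewrite exp_plus, exp_ln; auto. Qed.

Lemma pw_lim0 p : 0 < p -> filterlim (pw p) (at_right 0) (locally 0).
Proof. intros Hp. apply filterlim_locally. intros eps.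
  unfold at_right, within. exists (mkposreal _ (exp_pos (ln eps / p))). intros t Ht Htp.
  change (Rabs (t - 0) < exp (ln eps / p)) in Ht. rewrite Rminus_0_r, Rabs_pos_eq in Ht by lra.
  change (Rabs (pw p t - 0) < eps). rewrite Rminus_0_r, Rabs_pos_eq by (left; apply pw_pos).
  pose proof (cond_pos eps).
  apply ln_increasing in Ht; auto. rewrite ln_exp in Ht.
  unfold pw. rewrite <- (exp_ln eps) by auto. apply exp_increasing.
  apply (Rmult_lt_compat_l p) in Ht; auto. replace (p * (ln eps / p)) with (ln eps) in Ht by (field; lra). lra.
Qed.

Lemma exp_lim_inf p : 0 < p -> filterlim (fun t => exp (- p * t)) (Rbar_locally p_infty) (locally 0).
Proof. intros Hp. apply filterlim_locally. intros eps. pose proof (cond_pos eps).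
  exists (- ln eps / p). intros t Ht.
  change (Rabs (exp (- p * t) - 0) < eps). rewrite Rminus_0_r, Rabs_pos_eq by (left; apply exp_pos).
  rewrite <- (exp_ln eps) by auto. apply exp_increasing.
  apply (Rmult_lt_compat_l p) in Ht; auto. replace (p * (- ln eps / p)) with (- ln eps) in Ht by (field; lra). lra.
Qed.

Lemma at_right0_lt x : 0 < x -> at_right 0 (fun a => 0 < a < x).
Proof. intros Hx. unfold at_right, within. exists (mkposreal x Hx). intros t Ht Htp.
  change (Rabs (t - 0) < x) in Ht. rewrite Rminus_0_r, Rabs_pos_eq in Ht by lra. lra. Qed.

Lemma pw_cont p t : 0 < t -> continuous (pw p) t.
Proof. intros. apply (ex_derive_continuous (pw p) t). eexists; apply pw_deriv; auto. Qed.

Lemma is_derive_eq (f : R -> R) x l l' : is_derive f x l -> l = l' -> is_derive f x l'.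
Proof. intros H ->; auto. Qed.

Lemma pwF_deriv p t : p <> 0 -> 0 < t -> is_derive (fun t => pw p t / p) t (pw (p - 1) t).
Proof. intros Hp Ht. apply is_derive_eq with (p * pw p t / t / p).
  apply (is_derive_scal_l (pw p) t _ (/ p)). apply pw_deriv; auto.
  assert (E : p = p - 1 + 1) by ring.
  rewrite (pw_shift p (p - 1) t Ht E).
  change (p * (t * pw (p - 1) t) / t / p = pw (p - 1) t). field. lra. Qed.

Lemma lim_div (F : R -> R) Fl k : Filter Fl -> k <> 0 -> filterlim F Fl (locally 0) ->
  filterlim (fun t => F t / k) Fl (locally 0).
Proof. intros HF Hk H. apply (filterlim_comp _ _ _ F (fun y => y / k) Fl (locally 0)).
  exact H.
  replace (locally 0) with (locally (0 / k)) at 2 by (f_equal; field; auto).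
  apply (ex_derive_continuous (fun y => y / k) 0). auto_derive. auto. Qed.

Lemma gen_right0' (F g : R -> R) y l0 v : 0 < y ->
  (forall x, 0 < x -> is_derive F x (g x)) -> (forall x, 0 < x -> continuous g x) ->
  filterlim F (at_right 0) (locally l0) -> v = F y - l0 ->
  is_RInt_gen g (at_right 0) (at_point y) v.
Proof. intros; subst; apply gen_right0; auto. Qed.

Lemma gen_pinf' (F g : R -> R) x l v : 0 < x ->
  (forall t, 0 < t -> is_derive F t (g t)) -> (forall t, 0 < t -> continuous g t) ->
  filterlim F (Rbar_locally p_infty) (locally l) -> v = l - F x ->
  is_RInt_gen g (at_point x) (Rbar_locally p_infty) v.
Proof. intros; subst; apply gen_pinf; auto. Qed.

Lemma J_bound a x l : 0 < a < 1 -> 0 < x ->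
  is_RInt_gen (fa a) (at_right 0) (at_point x) l ->
  Rabs (l - pw (1 - a) x / (1 - a)) <= a * pw (2 - a) x / (2 - a).
Proof.
  intros Ha Hx Hl.
  eapply (gen_cmp (HFa := at_right_proper_filter 0) (HFb := at_point_filter x)
            (fa a) (pw (- a)) (fun t => a * t * pw (- a) t)).
  - exists (fun a => 0 < a < x) (fun b => b = x). apply at_right0_lt; auto. reflexivity.
    intros u v Hu Hv. simpl. lra.
  - exists (fun a => 0 < a < x) (fun b => b = x). apply at_right0_lt; auto. reflexivity.
    intros u v Hu Hv t Ht. simpl in Ht. apply fa_near0; lra.
  - exact Hl.
  - apply gen_right0' with (F := fun t => pw (1 - a) t / (1 - a)) (l0 := 0); auto.
    + intros t Ht. apply is_derive_eq with (1 := pwF_deriv (1 - a) t ltac:(lra) Ht). f_equal; ring.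
    + intros t Ht; apply pw_cont; auto.
    + apply lim_div. apply at_right_proper_filter. lra. apply pw_lim0; lra.
    + ring.
  - apply gen_right0' with (F := fun t => a * (pw (2 - a) t / (2 - a))) (l0 := a * 0); auto.
    + intros t Ht. apply is_derive_eq with (a * pw (2 - a - 1) t).
      apply is_derive_scal. apply (pwF_deriv (2 - a) t ltac:(lra) Ht).
      assert (E : 2 - a - 1 = - a + 1) by ring.
      rewrite (pw_shift (2 - a - 1) (- a) t Ht E). req. ring.
    + intros t Ht. apply (ex_derive_continuous (fun t => a * t * pw (- a) t) t).
      apply ex_derive_mult. apply ex_derive_mult. apply ex_derive_const. apply ex_derive_id.
      eexists; apply pw_deriv; auto.
    + assert (H2a : 2 - a <> 0) by lra. assert (H2a' : 0 < 2 - a) by lra.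
      apply filterlim_comp with (1 := lim_div _ _ _ (@filter_filter _ _ (at_right_proper_filter 0)) H2a (pw_lim0 (2 - a) H2a')).
      apply (ex_derive_continuous (fun y => a * y) 0). auto_derive. auto.
    + field. lra.
Qed.

Lemma K_bound a x l : 0 < a < 1 -> 1 <= x ->
  is_RInt_gen (fa a) (at_point x) (Rbar_locally p_infty) l ->
  Rabs (l - exp (- a * x) / a) <= 2 * exp (- (1 + a) * x) / (1 + a).
Proof.
  intros Ha Hx Hl.
  assert (HP : Rbar_locally p_infty (fun b => x <= b)) by (exists x; intros; lra).
  eapply (gen_cmp (HFa := at_point_filter x) (HFb := Rbar_locally_filter p_infty)
            (fa a) (fun t => exp (- a * t)) (fun t => 2 * exp (- (1 + a) * t))).
  - exists (fun a => a = x) (fun b => x <= b). reflexivity. auto.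
    intros u v Hu Hv. simpl. lra.
  - exists (fun a => a = x) (fun b => x <= b). reflexivity. auto.
    intros u v Hu Hv t Ht. simpl in Ht. apply fa_nearinf; lra.
  - exact Hl.
  - apply gen_pinf' with (F := fun t => - exp (- a * t) / a) (l := 0); try lra.
    + intros t Ht. auto_derive. auto. field. lra.
    + intros t Ht. apply (ex_derive_continuous (fun t => exp (- a * t)) t). auto_derive. auto.
    + apply lim_div. apply Rbar_locally_filter. lra.
      replace (locally 0) with (locally (- 0)) by (f_equal; ring).
      apply filterlim_comp with (1 := exp_lim_inf a ltac:(lra)).
      apply (ex_derive_continuous (fun y => - y) 0). auto_derive. auto.
  - apply gen_pinf' with (F := fun t => - 2 * exp (- (1 + a) * t) / (1 + a)) (l := 0); try lra.
    + intros t Ht. auto_derive. auto. field. lra.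
    + intros t Ht. apply (ex_derive_continuous (fun t => 2 * exp (- (1 + a) * t)) t). auto_derive. auto.
    + apply lim_div. apply Rbar_locally_filter. lra.
      replace (locally 0) with (locally (- 2 * 0)) by (f_equal; ring).
      apply filterlim_comp with (1 := exp_lim_inf (1 + a) ltac:(lra)).
      apply (ex_derive_continuous (fun y => - 2 * y) 0). auto_derive. auto.
Qed.

Lemma exp_le_1 x : x <= 0 -> exp x <= 1.
Proof. intros. rewrite <- exp_0. apply exp_le_mono; auto. Qed.

Definition G (a x : R) := RInt (fa a) 1 x.

Lemma ex_RInt_fa a x y : 0 < x -> 0 < y -> ex_RInt (fa a) x y.
Proof. intros Hx Hy. apply (@ex_RInt_continuous R_CompleteNormedModule). intros z Hz. apply fa_cont.
  pose proof (Rmin_glb_lt x y 0 Hx Hy). lra. Qed.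

Lemma G_diff a x y : 0 < x -> 0 < y -> is_RInt (fa a) x y (G a y - G a x).
Proof. intros Hx Hy. unfold G.
  assert (E := RInt_Chasles (fa a) 1 x y (ex_RInt_fa a 1 x ltac:(lra) Hx) (ex_RInt_fa a x y Hx Hy)).
  change (RInt (fa a) 1 x + RInt (fa a) x y = RInt (fa a) 1 y) in E.
  replace (RInt (fa a) 1 y - RInt (fa a) 1 x) with (RInt (fa a) x y) by lra.
  apply (@RInt_correct R_CompleteNormedModule), ex_RInt_fa; auto. Qed.

Lemma G_deriv a x : 0 < x -> is_derive (G a) x (fa a x).
Proof. intros Hx. apply is_derive_RInt with 1.
  apply filter_imp with (2 := locally_pos x Hx). intros b Hb.
  apply (@RInt_correct R_CompleteNormedModule), ex_RInt_fa; lra.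
  apply fa_cont; auto. Qed.

Lemma G_mono a x y : 0 <= a -> 0 < x -> x <= y -> (y - x) * fa a y <= G a y - G a x.
Proof. intros Ha Hx Hxy.
  apply (is_RInt_le (fun _ => fa a y) (fa a) x y); auto.
  apply (is_RInt_const x y (fa a y)).
  apply G_diff; lra.
  intros t Ht. apply fa_decr; lra. Qed.

Lemma G_bound a x : 0 < a < 1 -> 1 <= x -> G a x <= 1 / a + 2 / (1 + a).
Proof. intros Ha Hx.
  set (H := fun t => - exp (- a * t) / a - 2 * exp (- (1 + a) * t) / (1 + a)).
  assert (HI : is_RInt (fun t => exp (- a * t) + 2 * exp (- (1 + a) * t)) 1 x (minus (H x) (H 1))).
  { apply (@is_RInt_derive R_CompleteNormedModule).
    - intros t Ht. unfold H. auto_derive. auto. field. lra.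
    - intros t Ht. apply (ex_derive_continuous (fun t => exp (- a * t) + 2 * exp (- (1 + a) * t)) t).
      auto_derive. auto. }
  assert (G a x - G a 1 <= minus (H x) (H 1)).
  { apply (is_RInt_le (fa a) (fun t => exp (- a * t) + 2 * exp (- (1 + a) * t)) 1 x); auto. apply G_diff; lra.
    intros t Ht. pose proof (fa_nearinf a t ltac:(lra) ltac:(lra)).
    apply Rabs_le_between in H0. lra. }
  assert (G a 1 = 0) by (unfold G; exact (@RInt_point R_CompleteNormedModule 1 (fa a))).
  unfold minus, plus, opp, H in H0; simpl in H0.
  pose proof (exp_pos (- a * x)). pose proof (exp_pos (- (1 + a) * x)).
  assert (exp (- a * 1) <= 1) by (apply exp_le_1; lra).
  assert (exp (- (1 + a) * 1) <= 1) by (apply exp_le_1; lra).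
  assert (0 < exp (- a * x) / a) by (apply Rdiv_lt_0_compat; lra).
  assert (0 < 2 * exp (- (1 + a) * x) / (1 + a)) by (apply Rdiv_lt_0_compat; lra).
  assert (exp (- a * 1) / a <= 1 / a) by (apply Rmult_le_compat_r; [left; apply Rinv_0_lt_compat|]; lra).
  assert (2 * exp (- (1 + a) * 1) / (1 + a) <= 2 / (1 + a)) by (apply Rmult_le_compat_r; [left; apply Rinv_0_lt_compat|]; lra).
  unfold Rminus in H0. lra.
Qed.

Lemma B_exists a : 0 < a < 1 ->
  { B | forall x, 0 < x -> is_RInt_gen (fa a) (at_point x) (Rbar_locally p_infty) (B - G a x) }.
Proof. intros Ha.
  set (E := fun z => exists x, 1 <= x /\ z = G a x).
  destruct (completeness E) as [B [HB1 HB2]].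
  { exists (1 / a + 2 / (1 + a)). intros z [x [Hx ->]]. apply G_bound; auto. }
  { exists (G a 1). exists 1. split; auto; lra. }
  exists B. intros x Hx.
  apply gen_pinf' with (F := G a) (l := B); auto.
  - intros t Ht. apply G_deriv; auto.
  - intros t Ht. apply fa_cont; auto.
  - apply filterlim_locally. intros eps. pose proof (cond_pos eps).
    assert (exists x0, 1 <= x0 /\ B - eps < G a x0).
    { apply Classical_Prop.NNPP. intros Hn.
      assert (B <= B - eps); [|lra]. apply HB2. intros z [x0 [Hx0 ->]].
      destruct (Rle_lt_dec (G a x0) (B - eps)); auto. exfalso; apply Hn; exists x0; auto. }
    destruct H0 as [x0 [Hx0 Hlt]]. exists x0. intros t Ht.
    change (Rabs (G a t - B) < eps).
    assert (G a t <= B) by (apply HB1; exists t; split; lra).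
    assert (G a x0 <= G a t).
    { pose proof (G_mono a x0 t ltac:(lra) ltac:(lra) ltac:(lra)). pose proof (fa_pos a t). nra. }
    rewrite Rabs_left1 by lra. lra.
Qed.

Definition Hyps (a c : R) (Phi : R -> R) : Prop :=
  (0 < a < 1) /\
  (forall s, 0 < s < 1 -> 0 < Phi s /\ is_RInt_gen (fa a) (at_right 0) (at_point (Phi s)) (c * s)) /\
  c = RInt_gen (fa a) (at_right 0) (Rbar_locally p_infty).

Lemma PF_ar0 : ProperFilter' (at_right 0).
Proof. apply Proper_StrongProper, at_right_proper_filter. Qed.
Lemma PF_ap (x : R) : ProperFilter' (@at_point R_UniformSpace x).
Proof. apply Proper_StrongProper, at_point_filter. Qed.
Lemma PF_inf : ProperFilter' (Rbar_locally p_infty).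
Proof. apply Proper_StrongProper, Rbar_locally_filter. Qed.

Lemma uniq_gen Fa Fb (HA : ProperFilter' Fa) (HB : ProperFilter' Fb) (f : R -> R) (l : R) :
  is_RInt_gen f Fa Fb l -> RInt_gen f Fa Fb = l.
Proof. exact (@is_RInt_gen_unique R_CompleteNormedModule Fa Fb HA HB f l). Qed.

Lemma F_J a c Phi : Hyps a c Phi ->
  exists J : R -> R,
    (forall x, 0 < x -> is_RInt_gen (fa a) (at_right 0) (at_point x) (J x)) /\
    (forall x y, 0 < x -> 0 < y -> J y - J x = G a y - G a x) /\
    (forall x, 0 < x -> is_RInt_gen (fa a) (at_point x) (Rbar_locally p_infty) (c - J x)) /\
    (forall s, 0 < s < 1 -> J (Phi s) = c * s).
Proof.
  intros (Ha & HP & Hc).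
  destruct (HP (1/2) ltac:(lra)) as [Hx0 Hi0].
  set (x0 := Phi (1/2)) in *.
  set (J := fun x => c * (1/2) + (G a x - G a x0)).
  assert (HJ : forall x, 0 < x -> is_RInt_gen (fa a) (at_right 0) (at_point x) (J x)).
  { intros x Hx. apply (is_RInt_gen_Chasles (Fa := at_right 0) (Fc := at_point x) (fa a) x0 _ _ Hi0).
    apply is_RInt_gen_at_point. apply G_diff; auto. }
  destruct (B_exists a Ha) as [B HB].
  assert (Hc2 : c = J 1 + (B - G a 1)).
  { rewrite Hc. apply (uniq_gen _ _ PF_ar0 PF_inf).
    apply (is_RInt_gen_Chasles (fa a) 1). apply HJ; lra. apply HB; lra. }
  exists J. split; [auto|split; [|split]].
  - intros x y Hx Hy. unfold J. ring.
  - intros x Hx. replace (c - J x) with (B - G a x) by (rewrite Hc2; unfold J; ring). apply HB; auto.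
  - intros s Hs. destruct (HP s Hs) as [Hps His].
    pose proof (uniq_gen _ _ PF_ar0 (PF_ap (Phi s)) _ _ His).
    pose proof (uniq_gen _ _ PF_ar0 (PF_ap (Phi s)) _ _ (HJ _ Hps)).
    congruence.
Qed.

Lemma inv_deriv (P H : R -> R) s k h0 del L :
  0 < del -> 0 <= L ->
  (forall t, Rabs (t - s) < del -> H (P t) = k * t) ->
  (forall t, Rabs (t - s) < del -> Rabs (P t - P s) <= L * Rabs (t - s)) ->
  derivable_pt_lim H (P s) h0 -> h0 <> 0 ->
  derivable_pt_lim P s (k / h0).
Proof.
  intros Hdel HL Heq Hlip Hd Hh0 eps Heps.
  assert (Hah : 0 < Rabs h0) by (apply Rabs_pos_lt; auto).
  assert (Hk1 : 0 < 2 * (Rabs k + 1)) by (pose proof (Rabs_pos k); lra).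
  set (eta := Rmin (Rabs h0 / 2) (eps * (Rabs h0 * Rabs h0) / (2 * (Rabs k + 1)))).
  assert (Heta : 0 < eta).
  { apply Rmin_pos. lra. apply Rdiv_lt_0_compat; auto. apply Rmult_lt_0_compat; auto. nra. }
  destruct (Hd eta Heta) as [d1 Hd1].
  assert (Hd1p : 0 < d1 / (L + 1)) by (apply Rdiv_lt_0_compat; [apply cond_pos|lra]).
  exists (mkposreal _ (Rmin_pos _ _ Hdel Hd1p)). intros h Hhn Hh. simpl in Hh.
  assert (Hh1 : Rabs h < del) by (pose proof (Rmin_l del (d1 / (L + 1))); lra).
  assert (Hh2 : Rabs h < d1 / (L + 1)) by (pose proof (Rmin_r del (d1 / (L + 1))); lra).
  set (D := P (s + h) - P s).
  assert (HD : Rabs D < d1).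
  { unfold D. replace h with (s + h - s) in Hh1 by ring.
    pose proof (Hlip (s + h) Hh1). replace (s + h - s) with h in H0 by ring.
    assert (L * Rabs h <= (L + 1) * Rabs h) by (pose proof (Rabs_pos h); nra).
    assert ((L + 1) * Rabs h < d1).
    { apply (Rmult_lt_compat_l (L + 1)) in Hh2; [|lra].
      replace ((L + 1) * (d1 / (L + 1))) with (pos d1) in Hh2 by (field; lra). auto. }
    lra. }
  assert (HHk : H (P s + D) - H (P s) = k * h).
  { unfold D. replace (P s + (P (s + h) - P s)) with (P (s + h)) by ring.
    rewrite Heq, Heq. ring. replace (s - s) with 0 by ring. rewrite Rabs_R0; auto.
    replace (s + h - s) with h by ring. auto. }
  fold D. replace (P (s + h) - P s) with D by reflexivity.
  destruct (Req_dec D 0) as [HD0|HD0].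
  - rewrite HD0 in HHk. replace (P s + 0) with (P s) in HHk by ring.
    assert (k = 0). { apply (Rmult_eq_reg_r h). lra. auto. }
    rewrite HD0, H0. replace (0 / h - 0 / h0) with 0 by (field; auto). rewrite Rabs_R0; auto.
  - pose proof (Hd1 D HD0 HD) as Hq. rewrite HHk in Hq. unfold eta in Hq.
    set (q := k * h / D) in *.
    assert (Hqe : Rabs (q - h0) < Rabs h0 / 2) by (pose proof (Rmin_l (Rabs h0 / 2) (eps * (Rabs h0 * Rabs h0) / (2 * (Rabs k + 1)))); lra).
    assert (Hqe2 : Rabs (q - h0) < eps * (Rabs h0 * Rabs h0) / (2 * (Rabs k + 1)))
      by (pose proof (Rmin_r (Rabs h0 / 2) (eps * (Rabs h0 * Rabs h0) / (2 * (Rabs k + 1)))); lra).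
    assert (Hq2 : Rabs h0 / 2 <= Rabs q).
    { pose proof (Rabs_triang_inv h0 q). rewrite <- Rabs_Ropp in Hqe. replace (- (q - h0)) with (h0 - q) in Hqe by ring. lra. }
    assert (Hq0 : q <> 0) by (intro Hq0; rewrite Hq0, Rabs_R0 in Hq2; lra).
    assert (Hk0 : k <> 0) by (intro; unfold q in Hq0; apply Hq0; subst; field; auto).
    assert (HDh : D / h = k / q) by (unfold q; field; auto).
    rewrite HDh.
    replace (k / q - k / h0) with (k * (h0 - q) / (q * h0)) by (field; auto).
    rewrite Rabs_div by (apply Rmult_integral_contrapositive; auto).
    rewrite Rabs_mult, Rabs_mult.
    assert (Hqq : 0 < Rabs q) by (apply Rabs_pos_lt; auto).
    apply (Rmult_lt_reg_r (Rabs q * Rabs h0)). nra.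
    replace (Rabs k * Rabs (h0 - q) / (Rabs q * Rabs h0) * (Rabs q * Rabs h0)) with (Rabs k * Rabs (h0 - q)) by (field; lra).
    rewrite <- Rabs_Ropp in Hqe2. replace (- (q - h0)) with (h0 - q) in Hqe2 by ring.
    assert (Rabs k * Rabs (h0 - q) <= Rabs k * (eps * (Rabs h0 * Rabs h0) / (2 * (Rabs k + 1)))).
    { apply Rmult_le_compat_l. apply Rabs_pos. lra. }
    assert (Rabs k * (eps * (Rabs h0 * Rabs h0) / (2 * (Rabs k + 1))) < eps * (Rabs h0 * Rabs h0) / 2).
    { pose proof (Rabs_pos k).
      replace (Rabs k * (eps * (Rabs h0 * Rabs h0) / (2 * (Rabs k + 1)))) with
        ((eps * (Rabs h0 * Rabs h0) / 2) * (Rabs k / (Rabs k + 1))) by (field; lra).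
      assert (Rabs k / (Rabs k + 1) < 1). { apply (Rmult_lt_reg_r (Rabs k + 1)). lra. field_simplify; lra. }
      assert (0 < eps * (Rabs h0 * Rabs h0) / 2) by (apply Rdiv_lt_0_compat; [apply Rmult_lt_0_compat; nra|lra]).
      nra. }
    assert (Rabs h0 / 2 * (eps * Rabs h0) <= Rabs q * (eps * Rabs h0)) by (apply Rmult_le_compat_r; nra).
    assert (eps * (Rabs h0 * Rabs h0) / 2 <= eps * (Rabs q * Rabs h0)).
    { replace (eps * (Rabs h0 * Rabs h0) / 2) with (Rabs h0 / 2 * (eps * Rabs h0)) by field.
      replace (eps * (Rabs q * Rabs h0)) with (Rabs q * (eps * Rabs h0)) by ring. auto. }
    lra.
Qed.

Lemma Phi_facts a c Phi : Hyps a c Phi ->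
  exists J : R -> R,
    (forall x, 0 < x -> is_RInt_gen (fa a) (at_right 0) (at_point x) (J x)) /\
    (forall x, 0 < x -> is_RInt_gen (fa a) (at_point x) (Rbar_locally p_infty) (c - J x)) /\
    (forall s, 0 < s < 1 -> J (Phi s) = c * s) /\
    (forall x y, 0 < x -> x <= y -> (y - x) * fa a y <= J y - J x) /\
    0 < c /\
    (forall s, 0 < s < 1 -> is_derive Phi s (c / fa a (Phi s))).
Proof.
  intros Hh. pose proof Hh as (Ha & HP & Hc).
  destruct (F_J a c Phi Hh) as (J & HJ1 & HJ2 & HJ3 & HJ4).
  assert (Jmono : forall x y, 0 < x -> x <= y -> (y - x) * fa a y <= J y - J x).
  { intros x y Hx Hxy. rewrite HJ2 by lra. apply G_mono; lra. }
  assert (Jder : forall x, 0 < x -> is_derive J x (fa a x)).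
  { intros x Hx. apply is_derive_ext_loc with (fun y => G a y + (J 1 - G a 1)).
    { apply filter_imp with (2 := locally_pos x Hx). intros y Hy.
      pose proof (HJ2 1 y ltac:(lra) Hy). lra. }
    apply is_derive_eq with (plus (fa a x) 0).
    exact (is_derive_plus (G a) (fun _ => J 1 - G a 1) x _ _ (G_deriv a x Hx) (is_derive_const (J 1 - G a 1) x)).
    change (fa a x + 0 = fa a x). ring. }
  assert (Hcpos : 0 < c).
  { destruct (HP (1/2) ltac:(lra)) as [Hp _].
    set (x1 := Rmin (Phi (1/2)) (1/2)).
    assert (Hx1 : 0 < x1 <= 1/2) by (unfold x1; split; [apply Rmin_pos; lra| apply Rmin_r]).
    assert (Hx1' : x1 <= Phi (1/2)) by apply Rmin_l.
    pose proof (J_bound a x1 (J x1) Ha ltac:(lra) (HJ1 x1 ltac:(lra))).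
    apply Rabs_le_between in H. destruct H as [H _].
    assert (E : 2 - a = (1 - a) + 1) by ring.
    rewrite (pw_shift (2 - a) (1 - a) x1 ltac:(lra) E) in H.
    pose proof (pw_pos (1 - a) x1) as Hpw.
    assert (0 < J x1).
    { assert (a * (x1 * pw (1 - a) x1) / (2 - a) < pw (1 - a) x1 / (1 - a)).
      { assert (a * x1 / (2 - a) < 1).
        { apply (Rmult_lt_reg_r (2 - a)). lra. unfold Rdiv. rewrite Rmult_assoc, Rinv_l by lra. nra. }
        assert (1 <= 1 / (1 - a)).
        { apply (Rmult_le_reg_r (1 - a)). lra. unfold Rdiv. rewrite Rmult_assoc, Rinv_l by lra. lra. }
        replace (a * (x1 * pw (1 - a) x1) / (2 - a)) with (pw (1 - a) x1 * (a * x1 / (2 - a))) by (field; lra).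
        replace (pw (1 - a) x1 / (1 - a)) with (pw (1 - a) x1 * (1 / (1 - a))) by (field; lra).
        nra. }
      lra. }
    pose proof (Jmono x1 (Phi (1/2)) ltac:(lra) Hx1'). pose proof (fa_pos a (Phi (1/2))).
    rewrite HJ4 in H1 by lra. nra. }
  exists J. do 5 (split; auto).
  assert (Pmono : forall s t, 0 < s < 1 -> 0 < t < 1 -> s < t -> Phi s < Phi t).
  { intros s t Hs Ht Hst. destruct (Rlt_le_dec (Phi s) (Phi t)); auto.
    destruct (HP t Ht) as [Hpt _].
    pose proof (Jmono (Phi t) (Phi s) Hpt r). rewrite !HJ4 in H by lra.
    pose proof (fa_pos a (Phi s)). nra. }
  intros s Hs.
  set (del := Rmin s (1 - s) / 2).
  assert (Hdel : 0 < del) by (unfold del; apply Rdiv_lt_0_compat; [apply Rmin_pos; lra|lra]).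
  assert (Hdel2 : del <= s / 2 /\ del <= (1 - s) / 2).
  { unfold del. split; apply Rmult_le_compat_r; try lra. apply Rmin_l. apply Rmin_r. }
  set (Y := Phi (s + del)).
  assert (HY : 0 < fa a Y) by apply fa_pos.
  apply is_derive_Reals.
  apply (inv_deriv Phi J s c (fa a (Phi s)) del (c / fa a Y)).
  - auto.
  - left; apply Rdiv_lt_0_compat; auto.
  - intros t Ht. apply Rabs_lt_between in Ht. apply HJ4. lra.
  - intros t Ht. apply Rabs_lt_between in Ht.
    assert (Ht1 : 0 < t < 1) by lra.
    destruct (HP t Ht1) as [Hpt _]. destruct (HP s Hs) as [Hps _].
    assert (HtY : Phi t <= Y) by (left; apply Pmono; lra).
    assert (HsY : Phi s <= Y) by (left; apply Pmono; lra).
    apply (Rmult_le_reg_r (fa a Y)); auto.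
    replace (c / fa a Y * Rabs (t - s) * fa a Y) with (c * Rabs (t - s)) by (field; lra).
    destruct (Rle_lt_dec (Phi s) (Phi t)).
    + pose proof (Jmono (Phi s) (Phi t) Hps r). rewrite !HJ4 in H by lra.
      pose proof (fa_decr a (Phi t) Y ltac:(lra) Hpt HtY).
      rewrite Rabs_pos_eq by lra.
      destruct (Rle_lt_dec s t).
      * rewrite Rabs_pos_eq by lra. nra.
      * assert (Phi t < Phi s) by (apply Pmono; lra). lra.
    + pose proof (Jmono (Phi t) (Phi s) Hpt (Rlt_le _ _ r)). rewrite !HJ4 in H by lra.
      pose proof (fa_decr a (Phi s) Y ltac:(lra) Hps HsY).
      rewrite Rabs_left by lra.
      destruct (Rle_lt_dec t s).
      * rewrite Rabs_left1 by lra. nra.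
      * assert (Phi s < Phi t) by (apply Pmono; lra). lra.
  - apply is_derive_Reals. apply Jder. apply HP; auto.
  - pose proof (fa_pos a (Phi s)); lra.
Qed.

Lemma locally_01 s : 0 < s < 1 -> locally s (fun t => 0 < t < 1).
Proof. intros Hs. assert (0 < Rmin s (1 - s)) by (apply Rmin_pos; lra).
  exists (mkposreal _ H). intros t Ht. change (Rabs (t - s) < Rmin s (1 - s)) in Ht.
  apply Rabs_lt_between in Ht. pose proof (Rmin_l s (1 - s)). pose proof (Rmin_r s (1 - s)). lra. Qed.

Lemma div_fa c a y : c / fa a y = c * exp (a * ln (exp y - 1)).
Proof. unfold fa. replace (a * ln (exp y - 1)) with (- (- a * ln (exp y - 1))) by ring.
  rewrite exp_Ropp. field. apply Rgt_not_eq, exp_pos. Qed.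

Lemma ln_Linf a c Phi n : Hyps a c Phi -> 1 < INR n -> forall s, 0 < s < 1 ->
  let y := Phi s in let L := ln (exp y - 1) in
  0 < Linf_c2 Phi s /\ ln (Linf_c2 Phi s) = L - 2 * ln c - ln a - y - 2 * a * L /\
  0 < Linf_c1 n Phi s /\ ln (Linf_c1 n Phi s) = ln (INR n - 1) - ln c - a * L.
Proof.
  intros Hh Hn s Hs y L.
  destruct (Phi_facts a c Phi Hh) as (J & _ & _ & _ & _ & Hc & Hd).
  pose proof Hh as (Ha & HP & _).
  assert (Hy : 0 < y) by (apply HP; auto).
  assert (Hey : 0 < exp y - 1) by (apply expm1_pos; auto).
  set (E := exp (a * L)).
  assert (HE : 0 < E) by apply exp_pos.
  assert (HD1 : Derive Phi s = c * E).
  { rewrite (is_derive_unique _ _ _ (Hd s Hs)). apply div_fa. }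
  assert (HD2 : Derive_n Phi 2 s = c * c * a * exp y * (E * E) / (exp y - 1)).
  { simpl. rewrite (Derive_ext_loc _ (fun t => c * exp (a * ln (exp (Phi t) - 1)))).
    2:{ apply filter_imp with (2 := locally_01 s Hs). intros t Ht. change (Derive Phi t = c * exp (a * ln (exp (Phi t) - 1))).
        rewrite (is_derive_unique _ _ _ (Hd t Ht)). apply div_fa. }
    apply is_derive_unique.
    apply is_derive_eq with (scal (c / fa a (Phi s)) (c * exp (a * ln (exp (Phi s) - 1)) * (a * exp (Phi s) / (exp (Phi s) - 1)))).
    - apply (is_derive_comp (fun y => c * exp (a * ln (exp y - 1))) Phi s).
      + auto_derive. fold y. lra. fold y. unfold Rminus, Rdiv. ring.
      + apply Hd; auto.
    - rewrite div_fa. fold y. fold L. fold E. change ((c * E) * (c * E * (a * exp y / (exp y - 1))) = c * c * a * exp y * (E * E) / (exp y - 1)).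
      field. lra. }
  unfold Linf_c2, Linf_c1. rewrite HD2, HD1.
  pose proof (exp_pos y).
  assert (0 < c * c * a * exp y * (E * E) / (exp y - 1)).
  { apply Rdiv_lt_0_compat; auto. repeat apply Rmult_lt_0_compat; lra. }
  split; [apply Rinv_0_lt_compat; auto|split; [|split]].
  - rewrite ln_Rinv by auto. unfold Rdiv. rewrite !ln_mult; try (repeat apply Rmult_lt_0_compat); try lra;
      try (apply Rinv_0_lt_compat; lra).
    rewrite ln_Rinv by lra. unfold E. rewrite ln_exp, ln_exp. fold L. ring.
  - apply Rdiv_lt_0_compat; [lra|]. apply Rmult_lt_0_compat; lra.
  - unfold Rdiv. rewrite ln_mult by (try lra; apply Rinv_0_lt_compat, Rmult_lt_0_compat; lra).
    rewrite ln_Rinv by (apply Rmult_lt_0_compat; lra). rewrite ln_mult by lra.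
    unfold E. rewrite ln_exp. ring.
Qed.

Lemma L_bounds y : 0 < y -> ln y <= ln (exp y - 1) <= ln y + y.
Proof. intros Hy. pose proof (expm1_pos y Hy). split.
  apply ln_le; auto; left; apply expm1_gt; auto.
  replace (ln y + y) with (ln (y * exp y)) by (rewrite ln_mult, ln_exp; auto; apply exp_pos).
  apply ln_le; auto. pose proof (expm1_le y ltac:(lra)). lra. Qed.

Lemma J_small_pos a x l : 0 < a < 1 -> 0 < x <= 1/2 ->
  is_RInt_gen (fa a) (at_right 0) (at_point x) l -> 0 < l.
Proof. intros Ha Hx Hl.
  pose proof (J_bound a x l Ha ltac:(lra) Hl).
  apply Rabs_le_between in H. destruct H as [H _].
  assert (E : 2 - a = (1 - a) + 1) by ring.
  rewrite (pw_shift (2 - a) (1 - a) x ltac:(lra) E) in H.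
  pose proof (pw_pos (1 - a) x) as Hpw.
  assert (a * x / (2 - a) < 1).
  { apply (Rmult_lt_reg_r (2 - a)). lra. unfold Rdiv. rewrite Rmult_assoc, Rinv_l by lra. nra. }
  assert (1 <= 1 / (1 - a)).
  { apply (Rmult_le_reg_r (1 - a)). lra. unfold Rdiv. rewrite Rmult_assoc, Rinv_l by lra. lra. }
  replace (a * (x * pw (1 - a) x) / (2 - a)) with (pw (1 - a) x * (a * x / (2 - a))) in H by (field; lra).
  replace (pw (1 - a) x / (1 - a)) with (pw (1 - a) x * (1 / (1 - a))) in H by (field; lra).
  nra. Qed.

Lemma ln_model A u v : 0 < A -> ln (A * exp u / exp v) = ln A + u - v.
Proof. intros HA. unfold Rdiv. rewrite ln_mult. rewrite ln_mult by (auto; apply exp_pos).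
  rewrite ln_Rinv by apply exp_pos. rewrite !ln_exp. ring.
  apply Rmult_lt_0_compat; auto; apply exp_pos. apply Rinv_0_lt_compat, exp_pos. Qed.

Lemma INR_ge2 n : (2 <= n)%nat -> 2 <= INR n.
Proof. intros. apply le_INR in H. simpl in H. lra. Qed.

Lemma near0 n Phi : (2 <= n)%nat -> Hyps (1 / (INR n + 1)) (c_n n) Phi ->
  rel_err_O (Linf_c2 Phi) (Lminus_c2 n) (fun s => Rpower s ((INR n + 1) / INR n)) /\
  rel_err_O (Linf_c1 n Phi) (Lminus_c1 n) (fun s => Rpower s ((INR n + 1) / INR n)).
Proof.
  intros Hn Hh. pose proof (INR_ge2 n Hn) as HN.
  set (N := INR n) in *. set (a := 1 / (N + 1)) in *. set (c := c_n n) in *.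
  assert (Ha : 0 < a < 1).
  { unfold a. split. apply Rdiv_lt_0_compat; lra.
    apply (Rmult_lt_reg_r (N + 1)). lra. unfold Rdiv. rewrite Rmult_assoc, Rinv_l by lra. lra. }
  destruct (Phi_facts a c Phi Hh) as (J & HJ1 & HJ3 & HJ4 & Jmono & Hc & Hd).
  pose proof Hh as (_ & HP & _).
  set (m := J (1/4)).
  assert (Hm : 0 < m) by (apply (J_small_pos a (1/4)); [auto|lra|apply HJ1; lra]).
  set (del := Rmin (1/2) (m / c)).
  assert (Hdel : 0 < del) by (apply Rmin_pos; [lra|apply Rdiv_lt_0_compat; auto]).
  assert (Hdel1 : del <= 1/2) by apply Rmin_l.
  assert (Hdel2 : del <= m / c) by apply Rmin_r.
  set (lN := ln N). set (l1 := ln (N + 1)). set (lc := ln c).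
  set (k0 := exp ((N + 1) / N * (-1 - lN + l1 - lc))).
  assert (Hk0 : 0 < k0) by apply exp_pos.
  assert (EST : forall s, 0 < s < del ->
    let y := Phi s in
    exists lw E1, 0 < y <= 1/4 /\ Rabs lw <= 2 * y /\ 0 <= E1 <= y /\
      ln (exp y - 1) = ln y + E1 /\
      ln s = lw + (1 - a) * ln y - (lN - l1) - lc /\
      y * k0 <= Rpower s ((N + 1) / N)).
  { intros s Hs y.
    assert (Hs1 : 0 < s < 1) by lra.
    assert (Hy : 0 < y) by (apply HP; auto).
    assert (Hy4 : y <= 1/4).
    { destruct (Rle_lt_dec y (1/4)); auto. exfalso.
      pose proof (Jmono (1/4) y ltac:(lra) ltac:(lra)). fold m in H. assert (HJy : J y = c * s) by (apply HJ4; auto). rewrite HJy in H.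
      pose proof (fa_pos a y). assert (m <= c * s) by nra.
      assert (m / c <= s). { apply (Rmult_le_reg_r c); auto. unfold Rdiv; rewrite Rmult_assoc, Rinv_l by lra. lra. }
      lra. }
    pose proof (J_bound a y (c * s) Ha Hy) as Jb.
    rewrite <- (HJ4 s Hs1) in Jb. specialize (Jb (HJ1 y Hy)). rewrite (HJ4 s Hs1) in Jb.
    assert (E : 2 - a = (1 - a) + 1) by ring.
    rewrite (pw_shift (2 - a) (1 - a) y Hy E) in Jb.
    set (P := pw (1 - a) y) in *. assert (HPp : 0 < P) by apply pw_pos.
    set (w := c * s * (1 - a) / P).
    assert (Hw1 : Rabs (w - 1) <= y).
    { replace (w - 1) with ((c * s - P / (1 - a)) * ((1 - a) / P)) by (unfold w; field; lra).
      rewrite Rabs_mult. rewrite (Rabs_pos_eq ((1 - a) / P)) by (left; apply Rdiv_lt_0_compat; lra).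
      apply Rle_trans with (a * (y * P) / (2 - a) * ((1 - a) / P)).
      apply Rmult_le_compat_r; auto. left; apply Rdiv_lt_0_compat; lra.
      replace (a * (y * P) / (2 - a) * ((1 - a) / P)) with (y * (a * (1 - a) / (2 - a))) by (field; lra).
      assert (a * (1 - a) / (2 - a) <= 1).
      { apply (Rmult_le_reg_r (2 - a)). lra. unfold Rdiv. rewrite Rmult_assoc, Rinv_l by lra. nra. }
      nra. }
    assert (Hw : / 2 <= w) by (apply Rabs_le_between in Hw1; lra).
    exists (ln w), (ln (exp y - 1) - ln y).
    pose proof (L_bounds y Hy).
    assert (Hlw : Rabs (ln w) <= 2 * y) by (pose proof (abs_ln_le w Hw); lra).
    assert (Hls : ln s = ln w + (1 - a) * ln y - (lN - l1) - lc).
    { assert (c * s = w * P * / (1 - a)) by (unfold w; field; lra).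
      assert (ln (c * s) = ln w + (1 - a) * ln y - (lN - l1)).
      { rewrite H0. rewrite !ln_mult; try lra; try (apply Rinv_0_lt_compat; lra); try nra.
        rewrite ln_Rinv by lra. unfold P, pw. rewrite ln_exp.
        replace (1 - a) with (N / (N + 1)) by (unfold a; field; lra).
        unfold Rdiv. rewrite ln_mult by (try lra; apply Rinv_0_lt_compat; lra). rewrite ln_Rinv by lra.
        unfold lN, l1. ring. }
      rewrite ln_mult in H1 by lra. unfold lc. lra. }
    split; [lra|split; [auto|split; [lra|split; [ring|split; [auto|]]]]].
    unfold Rpower. rewrite Hls.
    replace ((N + 1) / N * (ln w + (1 - a) * ln y - (lN - l1) - lc)) with
      (ln y + (N + 1) / N * (ln w - lN + l1 - lc)) by (unfold a; field; lra).
    rewrite exp_plus, exp_ln by auto. apply Rmult_le_compat_l. lra. unfold k0. apply exp_le_mono.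
    apply Rmult_le_compat_l. left; apply Rdiv_lt_0_compat; lra.
    apply Rabs_le_between in Hlw. lra. }
  assert (Hcp : 0 < c) by auto.
  assert (Hdn : d_n n = exp (1 / N * (lN - l1) + (N + 1) / N * lc)).
  { assert (HlNN : ln (N / (N + 1)) = lN - l1).
    { unfold Rdiv. rewrite ln_mult by (try lra; apply Rinv_0_lt_compat; lra). rewrite ln_Rinv by lra. reflexivity. }
    unfold d_n, Rpower. fold N c. rewrite exp_plus, HlNN. reflexivity. }
  split.
  - apply (rel_from_log _ _ _ (4 / k0) del); auto. left; apply Rdiv_lt_0_compat; lra.
    intros s Hs. destruct (EST s Hs) as (lw & E1 & Hy & Hlw & HE1 & HL & Hls & Heps).
    assert (Hs1 : 0 < s < 1) by lra.
    assert (HN1 : 1 < N) by lra. destruct (ln_Linf a c Phi n Hh HN1 s Hs1) as (H2p & H2l & _ & _).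
    set (y := Phi s) in *.
    unfold Lminus_c2. rewrite Hdn. fold N.
    assert (Hmod : ln (N * Rpower s ((N - 1) / N) / exp (1 / N * (lN - l1) + (N + 1) / N * lc))
                   = lN + (N - 1) / N * ln s - (1 / N * (lN - l1) + (N + 1) / N * lc)).
    { unfold Rpower. rewrite ln_model by lra. reflexivity. }
    assert (Hla : ln a = - l1).
    { unfold a, Rdiv. rewrite Rmult_1_l, ln_Rinv by lra. reflexivity. }
    assert (Hdiff : ln (Linf_c2 Phi s) - ln (N * Rpower s ((N - 1) / N) / exp (1 / N * (lN - l1) + (N + 1) / N * lc))
                    = (1 - 2 * a) * E1 - y - (N - 1) / N * lw).
    { rewrite Hmod, H2l, HL, Hls, Hla. fold lc. unfold a. field. lra. }
    assert (Habs : Rabs ((1 - 2 * a) * E1 - y - (N - 1) / N * lw) <= 4 * y).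
    { assert (0 <= 1 - 2 * a <= 1) by (unfold a; split; [apply (Rmult_le_reg_r (N+1)); [lra|]; field_simplify; lra | apply (Rmult_le_reg_r (N+1)); [lra|]; field_simplify; lra]).
      assert (0 <= (N - 1) / N <= 1) by (split; [apply Rdiv_le_0_compat; lra| apply (Rmult_le_reg_r N); [lra|]; field_simplify; lra]).
      apply Rabs_le_between in Hlw. apply Rabs_le_between. split; nra. }
    repeat split.
    + auto.
    + apply Rdiv_lt_0_compat; [apply Rmult_lt_0_compat; [lra|apply exp_pos]|apply exp_pos].
    + unfold Rpower; left; apply exp_pos.
    + rewrite Hdiff. apply Rle_trans with (4 * y); auto.
      apply Rle_trans with (4 / k0 * (y * k0)). right; field; lra.
      apply Rmult_le_compat_l; auto. left; apply Rdiv_lt_0_compat; lra.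
    + rewrite Hdiff. lra.
  - apply (rel_from_log _ _ _ (4 / k0) del); auto. left; apply Rdiv_lt_0_compat; lra.
    intros s Hs. destruct (EST s Hs) as (lw & E1 & Hy & Hlw & HE1 & HL & Hls & Heps).
    assert (Hs1 : 0 < s < 1) by lra.
    assert (HN1 : 1 < N) by lra. destruct (ln_Linf a c Phi n Hh HN1 s Hs1) as (_ & _ & H1p & H1l).
    set (y := Phi s) in *.
    unfold Lminus_c1. rewrite Hdn. fold N.
    assert (Hmod : ln ((N - 1) * Rpower s (- (1 / N)) / exp (1 / N * (lN - l1) + (N + 1) / N * lc))
                   = ln (N - 1) + - (1 / N) * ln s - (1 / N * (lN - l1) + (N + 1) / N * lc)).
    { unfold Rpower. rewrite ln_model by lra. reflexivity. }
    assert (Hdiff : ln (Linf_c1 n Phi s) - ln ((N - 1) * Rpower s (- (1 / N)) / exp (1 / N * (lN - l1) + (N + 1) / N * lc))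
                    = - a * E1 + 1 / N * lw).
    { rewrite Hmod, H1l, HL, Hls. fold lc. unfold a. change (INR n) with N. field. lra. }
    assert (Habs : Rabs (- a * E1 + 1 / N * lw) <= 4 * y).
    { assert (0 <= 1 / N <= 1) by (split; [apply Rdiv_le_0_compat; lra| apply (Rmult_le_reg_r N); [lra|]; field_simplify; lra]).
      apply Rabs_le_between in Hlw. apply Rabs_le_between. split; nra. }
    repeat split.
    + auto.
    + apply Rdiv_lt_0_compat; [apply Rmult_lt_0_compat; [lra|apply exp_pos]|apply exp_pos].
    + unfold Rpower; left; apply exp_pos.
    + rewrite Hdiff. apply Rle_trans with (4 * y); auto.
      apply Rle_trans with (4 / k0 * (y * k0)). right; field; lra.
      apply Rmult_le_compat_l; auto. left; apply Rdiv_lt_0_compat; lra.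
    + rewrite Hdiff. lra.
Qed.

Lemma near1 n Phi : (2 <= n)%nat -> Hyps (1 / (INR n + 1)) (c_n n) Phi ->
  rel_err_O (fun eta => Linf_eta_c2 Phi eta) (Lplus_c2 n) (fun eta => eta ^ (n + 1)) /\
  rel_err_O (fun eta => Linf_eta_c1 n Phi eta) (Lplus_c1 n) (fun eta => eta ^ (n + 1)).
Proof.
  intros Hn Hh. pose proof (INR_ge2 n Hn) as HN.
  set (N := INR n) in *. set (a := 1 / (N + 1)) in *. set (c := c_n n) in *.
  assert (Ha : 0 < a < 1).
  { unfold a. split. apply Rdiv_lt_0_compat; lra.
    apply (Rmult_lt_reg_r (N + 1)). lra. unfold Rdiv. rewrite Rmult_assoc, Rinv_l by lra. lra. }
  destruct (Phi_facts a c Phi Hh) as (J & HJ1 & HJ3 & HJ4 & Jmono & Hc & Hd).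
  pose proof Hh as (_ & HP & _).
  assert (He10 : / exp 10 < / 11).
  { apply Rinv_lt_contravar. pose proof (exp_pos 10); nra.
    pose proof (exp_ineq1 10 ltac:(lra)); lra. }
  set (M := c - J 10).
  assert (HM : 0 < M).
  { pose proof (K_bound a 10 M Ha ltac:(lra) (HJ3 10 ltac:(lra))).
    apply Rabs_le_between in H. destruct H as [H _].
    assert (exp (- (1 + a) * 10) = exp (- a * 10) * / exp 10).
    { rewrite <- exp_Ropp, <- exp_plus; f_equal; ring. }
    rewrite H0 in H. pose proof (exp_pos (- a * 10)). assert (0 < / exp 10) by (apply Rinv_0_lt_compat, exp_pos).
    assert (2 * (exp (- a * 10) * / exp 10) / (1 + a) < exp (- a * 10) / a).
    { apply Rlt_le_trans with (exp (- a * 10)).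
      - apply (Rmult_lt_reg_r (1 + a)). lra. unfold Rdiv. rewrite Rmult_assoc, Rinv_l by lra. nra.
      - unfold Rdiv. rewrite <- (Rmult_1_r (exp (- a * 10))) at 1. apply Rmult_le_compat_l; [lra|].
        rewrite <- Rinv_1. apply Rinv_le_contravar; lra. }
    lra. }
  set (del := Rmin (1/2) (M / c)).
  assert (Hdel : 0 < del) by (apply Rmin_pos; [lra|apply Rdiv_lt_0_compat; auto]).
  assert (Hdel1 : del <= 1/2) by apply Rmin_l.
  assert (Hdel2 : del <= M / c) by apply Rmin_r.
  set (l1 := ln (N + 1)). set (lc := ln c).
  set (k1 := (/ (2 * a * c)) ^ (n + 1)).
  assert (Hk1 : 0 < k1) by (apply pow_lt, Rinv_0_lt_compat; nra).
  assert (Hla : ln a = - l1).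
  { unfold a, Rdiv. rewrite Rmult_1_l, ln_Rinv by lra. reflexivity. }
  assert (EST : forall eta, 0 < eta < del ->
    let y := Phi (1 - eta) in
    exists lw E4, 10 <= y /\ Rabs lw <= 4 * exp (- y) /\ Rabs E4 <= 2 * exp (- y) /\
      exp (- y) < / 11 /\
      ln (exp y - 1) = y + E4 /\
      ln eta = lw - a * y - ln a - lc /\
      exp (- y) * k1 <= eta ^ (n + 1)).
  { intros eta Heta y.
    assert (Hs1 : 0 < 1 - eta < 1) by lra.
    assert (Hy : 0 < y) by (apply HP; auto).
    assert (HJy : J y = c * (1 - eta)) by (apply HJ4; auto).
    assert (Hy10 : 10 <= y).
    { destruct (Rle_lt_dec 10 y); auto. exfalso.
      pose proof (Jmono y 10 Hy ltac:(lra)). rewrite HJy in H.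
      pose proof (fa_pos a 10). assert (M <= c * eta) by (unfold M; nra).
      assert (M / c <= eta). { apply (Rmult_le_reg_r c); auto. unfold Rdiv; rewrite Rmult_assoc, Rinv_l by lra. lra. }
      lra. }
    set (t := exp (- y)).
    assert (Ht : 0 < t < / 11).
    { split. apply exp_pos. apply Rle_lt_trans with (/ exp 10); auto. unfold t. rewrite exp_Ropp.
      apply Rinv_le_contravar. apply exp_pos. apply exp_le_mono; lra. }
    pose proof (K_bound a y (c * eta) Ha ltac:(lra)) as Kb.
    replace (c * eta) with (c - J y) in Kb by (rewrite HJy; ring). specialize (Kb (HJ3 y Hy)).
    replace (c - J y) with (c * eta) in Kb by (rewrite HJy; ring).
    set (ea := exp (a * y)).
    assert (Hea : 0 < ea) by apply exp_pos.
    assert (Hea1 : exp (- a * y) = / ea) by (unfold ea; rewrite <- exp_Ropp; f_equal; ring).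
    assert (Hea2 : exp (- (1 + a) * y) = t / ea).
    { unfold Rdiv. rewrite <- Hea1. unfold t. rewrite <- exp_plus. f_equal; ring. }
    rewrite Hea1, Hea2 in Kb.
    set (w := a * ea * (c * eta)).
    assert (Hw1 : Rabs (w - 1) <= 2 * t).
    { replace (w - 1) with ((a * ea) * (c * eta - / ea / a)) by (unfold w; field; lra).
      rewrite Rabs_mult, (Rabs_pos_eq (a * ea)) by nra.
      apply Rle_trans with (a * ea * (2 * (t / ea) / (1 + a))). apply Rmult_le_compat_l; [nra|auto].
      replace (a * ea * (2 * (t / ea) / (1 + a))) with (2 * t * (a / (1 + a))) by (field; lra).
      assert (a / (1 + a) <= 1).
      { apply (Rmult_le_reg_r (1 + a)). lra. unfold Rdiv. rewrite Rmult_assoc, Rinv_l by lra. lra. }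
      nra. }
    assert (Hw : / 2 <= w) by (apply Rabs_le_between in Hw1; lra).
    exists (ln w), (ln (1 - t)).
    assert (Hlw : Rabs (ln w) <= 4 * t) by (pose proof (abs_ln_le w Hw); lra).
    assert (HE4 : Rabs (ln (1 - t)) <= 2 * t).
    { pose proof (abs_ln_le (1 - t) ltac:(lra)). replace (1 - t - 1) with (- t) in H by ring.
      rewrite Rabs_Ropp, (Rabs_pos_eq t) in H by lra. auto. }
    assert (Hceta : c * eta = w * / ea / a) by (unfold w; field; lra).
    assert (Hleta : ln eta = ln w - a * y - ln a - lc).
    { assert (ln (c * eta) = ln w - a * y - ln a).
      { rewrite Hceta. unfold Rdiv. rewrite !ln_mult; try lra; try (apply Rinv_0_lt_compat; lra);
          try (apply Rmult_lt_0_compat; try lra; apply Rinv_0_lt_compat; lra).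
        rewrite !ln_Rinv by lra. unfold ea. rewrite ln_exp. ring. }
      rewrite ln_mult in H by lra. unfold lc. lra. }
    split; [auto|split; [auto|split; [auto|split; [lra|split; [|split; [auto|]]]]]].
    - replace (exp y - 1) with (exp y * (1 - t)).
      rewrite ln_mult, ln_exp; auto. apply exp_pos. lra.
      unfold t. rewrite exp_Ropp. field. apply Rgt_not_eq, exp_pos.
    - assert (eta = w * / ea * / (a * c)) by (apply (Rmult_eq_reg_l c); [|lra]; rewrite Hceta; field; lra).
      assert (/ ea * / (2 * a * c) <= eta).
      { rewrite H. replace (w * / ea * / (a * c)) with (/ ea * / (2 * a * c) * (2 * w)) by (field; nra).
        assert (0 < / ea * / (2 * a * c)).
        { apply Rmult_lt_0_compat; apply Rinv_0_lt_compat; nra. }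
        nra. }
      apply Rle_trans with ((/ ea * / (2 * a * c)) ^ (n + 1)).
      + rewrite Rpow_mult_distr. unfold k1. apply Rmult_le_compat_r. left; apply pow_lt, Rinv_0_lt_compat; nra.
        rewrite <- Hea1. rewrite exp_mul_nat. unfold t. right. f_equal. rewrite plus_INR. simpl. fold N. unfold a. field. lra.
      + apply pow_incr. split; auto. left. apply Rmult_lt_0_compat; apply Rinv_0_lt_compat; nra. }
  assert (HN1 : 1 < N) by lra.
  split.
  - apply (rel_from_log _ _ _ (10 / k1) del); auto. left; apply Rdiv_lt_0_compat; lra.
    intros eta Heta. destruct (EST eta Heta) as (lw & E4 & Hy & Hlw & HE4 & Ht & HL & Hle & Heps).
    assert (Hs1 : 0 < 1 - eta < 1) by lra.
    destruct (ln_Linf a c Phi n Hh HN1 (1 - eta) Hs1) as (H2p & H2l & _ & _).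
    set (y := Phi (1 - eta)) in *.
    unfold Linf_eta_c2, Lplus_c2. fold N.
    assert (HlY : ln (eta ^ 2 / (N + 1)) = 2 * ln eta - l1).
    { unfold Rdiv. rewrite ln_mult by (try apply pow_lt; try apply Rinv_0_lt_compat; lra).
      rewrite ln_pow by lra. rewrite ln_Rinv by lra. simpl. unfold l1. ring. }
    assert (Hdiff : ln (Linf_c2 Phi (1 - eta)) - ln (eta ^ 2 / (N + 1)) = (1 - 2 * a) * E4 - 2 * lw).
    { rewrite HlY, H2l, HL, Hle, Hla. fold lc. unfold a. field. lra. }
    assert (Habs : Rabs ((1 - 2 * a) * E4 - 2 * lw) <= 10 * exp (- y)).
    { assert (0 <= 1 - 2 * a <= 1) by (unfold a; split; [apply (Rmult_le_reg_r (N+1)); [lra|]; field_simplify; lra | apply (Rmult_le_reg_r (N+1)); [lra|]; field_simplify; lra]).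
      apply Rabs_le_between in Hlw. apply Rabs_le_between in HE4. apply Rabs_le_between. split; nra. }
    pose proof (exp_pos (- y)).
    repeat split.
    + auto.
    + apply Rdiv_lt_0_compat; [apply pow_lt|]; lra.
    + left; apply pow_lt; lra.
    + rewrite Hdiff. apply Rle_trans with (10 * exp (- y)); auto.
      apply Rle_trans with (10 / k1 * (exp (- y) * k1)). right; field; lra.
      apply Rmult_le_compat_l; auto. left; apply Rdiv_lt_0_compat; lra.
    + rewrite Hdiff. lra.
  - apply rel_neg.
    apply (rel_from_log _ _ _ (10 / k1) del); auto. left; apply Rdiv_lt_0_compat; lra.
    intros eta Heta. destruct (EST eta Heta) as (lw & E4 & Hy & Hlw & HE4 & Ht & HL & Hle & Heps).
    assert (Hs1 : 0 < 1 - eta < 1) by lra.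
    destruct (ln_Linf a c Phi n Hh HN1 (1 - eta) Hs1) as (_ & _ & H1p & H1l).
    set (y := Phi (1 - eta)) in *.
    assert (HX : - Linf_eta_c1 n Phi eta = Linf_c1 n Phi (1 - eta)) by (unfold Linf_eta_c1; ring).
    assert (HY : - Lplus_c1 n eta = (N - 1) * eta / (N + 1)) by (unfold Lplus_c1; fold N; field; lra).
    rewrite HX, HY.
    assert (HlY : ln ((N - 1) * eta / (N + 1)) = ln (N - 1) + ln eta - l1).
    { unfold Rdiv. rewrite ln_mult by (try apply Rmult_lt_0_compat; try apply Rinv_0_lt_compat; lra).
      rewrite ln_mult by lra. rewrite ln_Rinv by lra. unfold l1. ring. }
    assert (Hdiff : ln (Linf_c1 n Phi (1 - eta)) - ln ((N - 1) * eta / (N + 1)) = - a * E4 - lw).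
    { rewrite HlY, H1l, HL, Hle, Hla. fold lc. change (INR n) with N. unfold a. field. lra. }
    assert (Habs : Rabs (- a * E4 - lw) <= 10 * exp (- y)).
    { apply Rabs_le_between in Hlw. apply Rabs_le_between in HE4. apply Rabs_le_between. split; nra. }
    pose proof (exp_pos (- y)).
    repeat split.
    + auto.
    + apply Rdiv_lt_0_compat; [apply Rmult_lt_0_compat|]; lra.
    + left; apply pow_lt; lra.
    + rewrite Hdiff. apply Rle_trans with (10 * exp (- y)); auto.
      apply Rle_trans with (10 / k1 * (exp (- y) * k1)). right; field; lra.
      apply Rmult_le_compat_l; auto. left; apply Rdiv_lt_0_compat; lra.
    + rewrite Hdiff. lra.
Qed.

Theorem lemma4p2 (n : nat) (Phi : R -> R) :
  (2 <= n)%nat ->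
  is_Phi_infty n Phi ->
  (* expansion at eta = 1 - s -> 0^+ *)
  (Linf_c0 = Lplus_c0 n /\
   rel_err_O (fun eta => Linf_eta_c2 Phi eta) (Lplus_c2 n) (fun eta => eta ^ (n + 1)) /\
   rel_err_O (fun eta => Linf_eta_c1 n Phi eta) (Lplus_c1 n) (fun eta => eta ^ (n + 1)))
  /\
  (* expansion at s -> 0^+ *)
  (Linf_c0 = Lminus_c0 n /\
   rel_err_O (Linf_c2 Phi) (Lminus_c2 n) (fun s => Rpower s ((INR n + 1) / INR n)) /\
   rel_err_O (Linf_c1 n Phi) (Lminus_c1 n) (fun s => Rpower s ((INR n + 1) / INR n))).
Proof.
  intros Hn HPhi. pose proof (INR_ge2 n Hn) as HN.
  assert (Hh : Hyps (1 / (INR n + 1)) (c_n n) Phi).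
  { split; [|split].
    - split. apply Rdiv_lt_0_compat; lra.
      apply (Rmult_lt_reg_r (INR n + 1)). lra. unfold Rdiv. rewrite Rmult_assoc, Rinv_l by lra. lra.
    - exact HPhi.
    - reflexivity. }
  destruct (near0 n Phi Hn Hh) as [A1 A2]. destruct (near1 n Phi Hn Hh) as [B1 B2].
  split; split; auto.
  - unfold Linf_c0, Lplus_c0. field. lra.
  - unfold Linf_c0, Lminus_c0. assert (0 < d_n n) by (unfold d_n, Rpower; apply Rmult_lt_0_compat; apply exp_pos).
    field. lra.
Qed.
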